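(* Let $X$ be a Baire space, $Y$ a topological space, $(Z,d)$ a metric space and $f:X\times Y\to Z$ a mapping. Suppose that each $y\in Y$ has a neighborhood with a countable pseudobase, and that one of the following holds: (i) for each $x\in X$, $f_x$ is quasicontinuous and there is a dense set $D_x\subset Y$ such that $f^y$ is quasicontinuous at $x$ for every $y\in D_x$; (ii) for each $y\in Y$, $f^y$ is quasicontinuous and there is a dense Baire subspace $Q_y\subset X$ such that $f_x$ is quasicontinuous at $y$ for every $x\in Q_y$. Then $f$ is quasicontinuous (as a mapping on $X\times Y$ with the product topology).
   Context: $f_x(y)=f^y(x)=f(x,y)$. A mapping $g:T\to Z$ is quasicontinuous at $t$ if for each neighborhood $U$ of $t$ and each neighborhood $W$ of $g(t)$ there is an open $O$ with $\emptyset\ne O\subset U$ and $g(O)\subset W$; quasicontinuous means at every point. A pseudobase of a space is a collection of nonempty open sets such that every nonempty open set contains one of them. *)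

(* Defs.v *)
From Stdlib Require Import Reals.
Open Scope R_scope.

Definition topology (S : Type) := (S -> Prop) -> Prop.

Definition is_topology {S : Type} (T : topology S) : Prop :=
  T (fun _ => True) /\
  (forall U V, T U -> T V -> T (fun x => U x /\ V x)) /\
  (forall F : (S -> Prop) -> Prop, (forall U, F U -> T U) ->
     T (fun x => exists U, F U /\ U x)).

Definition nbhd {S : Type} (T : topology S) (N : S -> Prop) (x : S) : Prop :=
  exists U, T U /\ U x /\ forall y, U y -> N y.

Definition dense {S : Type} (T : topology S) (D : S -> Prop) : Prop :=
  forall U, T U -> (exists x, U x) -> exists x, U x /\ D x.

Definition baire {S : Type} (T : topology S) : Prop :=
  forall G : nat -> S -> Prop, (forall n, T (G n) /\ dense T (G n)) ->
    dense T (fun x => forall n, G n x).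

Definition subspace {S : Type} (T : topology S) (A : S -> Prop) :
  topology {x : S | A x} :=
  fun V => exists U, T U /\ forall s, V s <-> U (proj1_sig s).

Definition has_countable_pseudobase {S : Type} (T : topology S) : Prop :=
  exists B : nat -> S -> Prop,
    (forall n, T (B n) /\ exists x, B n x) /\
    (forall V, T V -> (exists x, V x) ->
       exists n, forall x, B n x -> V x).

Definition prod_topology {S1 S2 : Type} (T1 : topology S1) (T2 : topology S2) :
  topology (S1 * S2) :=
  fun W => forall p, W p -> exists A B, T1 A /\ T2 B /\ A (fst p) /\ B (snd p) /\
     forall a b, A a -> B b -> W (a, b).

Definition is_metric {Z : Type} (d : Z -> Z -> R) : Prop :=
  (forall x y, 0 <= d x y) /\
  (forall x y, d x y = 0 <-> x = y) /\
  (forall x y, d x y = d y x) /\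
  (forall x y z, d x z <= d x y + d y z).

Definition metric_topology {Z : Type} (d : Z -> Z -> R) : topology Z :=
  fun U => forall z, U z -> exists eps, 0 < eps /\ forall w, d z w < eps -> U w.

Definition quasicontinuous_at {S Z : Type} (T : topology S) (TZ : topology Z)
  (g : S -> Z) (t : S) : Prop :=
  forall U W, nbhd T U t -> nbhd TZ W (g t) ->
    exists O, T O /\ (exists s, O s) /\ (forall s, O s -> U s) /\
              (forall s, O s -> W (g s)).

Definition quasicontinuous {S Z : Type} (T : topology S) (TZ : topology Z)
  (g : S -> Z) : Prop := forall t, quasicontinuous_at T TZ g t.

(* Main.v *)
Require Import Defs.
From Stdlib Require Import Reals Lra Classical FunctionalExtensionality PropExtensionality.
Open Scope R_scope.

Lemma open_ext {S} (T : topology S) U V : T U -> (forall x, U x <-> V x) -> T V.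
Proof.
  intros HU H. assert (U = V) as <-; [|exact HU].
  apply functional_extensionality; intros x; apply propositional_extensionality; apply H.
Qed.

Lemma open_inter {S} (T: topology S) U V : is_topology T -> T U -> T V -> T (fun x => U x /\ V x).
Proof. intros [_ [H _]]; auto. Qed.

Lemma ball_nbhd {Z} (d : Z -> Z -> R) z r : is_metric d -> 0 < r ->
  nbhd (metric_topology d) (fun w => d z w < r) z.
Proof.
  intros [Hpos [Hz [Hs Ht]]] Hr. exists (fun w => d z w < r). split; [|split].
  - intros w Hw. exists (r - d z w). split; [lra|]. intros v Hv.
    pose proof (Ht z w v). lra.
  - assert (d z z = 0) by (apply Hz; reflexivity). lra.
  - auto.
Qed.

Lemma qc_ball {S Z} (T : topology S) (d : Z -> Z -> R) g t U r :
  is_metric d -> quasicontinuous_at T (metric_topology d) g t -> T U -> U t -> 0 < r ->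
  exists O, T O /\ (exists s, O s) /\ (forall s, O s -> U s) /\ (forall s, O s -> d (g t) (g s) < r).
Proof.
  intros Hm Hq HU Ht Hr. apply (Hq U (fun w => d (g t) w < r)).
  - exists U; auto.
  - apply ball_nbhd; auto.
Qed.

Lemma baire_cover {S} (T : topology S) (A0 : S -> Prop) (E : nat -> S -> Prop) :
  is_topology T -> baire T -> T A0 -> (exists x, A0 x) ->
  (forall x, A0 x -> exists n, E n x) ->
  exists n A1, T A1 /\ (exists x, A1 x) /\ (forall x, A1 x -> A0 x) /\
    (forall O, T O -> (exists x, O x) -> (forall x, O x -> A1 x) -> exists x, O x /\ E n x).
Proof.
  intros Htop Hb HA0 [a Ha] Hcov.
  apply NNPP; intro H.
  set (G := fun n x => exists O, (T O /\ forall y, O y -> ~ (E n y /\ A0 y)) /\ O x).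
  assert (HG : forall n, T (G n) /\ dense T (G n)).
  { intro n. split.
    - destruct Htop as [_ [_ Hu]]. apply (Hu (fun O => T O /\ forall y, O y -> ~ (E n y /\ A0 y))).
      intros U [HU _]; exact HU.
    - intros U HU [u Hu].
      destruct (classic (exists x, U x /\ A0 x)) as [[x [HxU HxA]] | Hno].
      + assert (HO1 : T (fun x => U x /\ A0 x)) by (apply open_inter; auto).
        destruct (classic (forall O, T O -> (exists x, O x) -> (forall x, O x -> U x /\ A0 x) -> exists x, O x /\ E n x)) as [Hd|Hnd].
        { exfalso. apply H. exists n, (fun x => U x /\ A0 x). split; [exact HO1|].
          split; [exists x; auto|]. split; [intros y [_ Hy]; exact Hy| exact Hd]. }
        apply NNPP; intro Hno2; apply Hnd; intros O HO [o Ho] Hsub; apply NNPP; intro Hno3; apply Hno2.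
        exists o. split; [apply Hsub in Ho; tauto|]. exists O. split; [split; [exact HO|] |exact Ho].
        intros y Hy [HE _]. apply Hno3. exists y; auto.
      + exists u. split; auto. exists U. split; [split; [exact HU|]|exact Hu].
        intros y Hy [_ HA]. apply Hno; eauto. }
  destruct (Hb G HG A0 HA0 (ex_intro _ a Ha)) as [x [HxA HxG]].
  destruct (Hcov x HxA) as [n Hn].
  destruct (HxG n) as [O [[_ HO] Ox]]. exact (HO x Ox (conj Hn HxA)).
Qed.

Lemma subspace_top {S} (T : topology S) (Q : S -> Prop) : is_topology T -> is_topology (subspace T Q).
Proof.
  intros [H1 [H2 H3]]. split; [|split].
  - exists (fun _ => True). split; [exact H1|]. tauto.
  - intros U V [U' [HU' EU]] [V' [HV' EV]]. exists (fun x => U' x /\ V' x). split; [apply H2; auto|].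
    intro s. specialize (EU s); specialize (EV s). cbv beta. tauto.
  - intros F HF.
    exists (fun x => exists U, (exists V, F V /\ T U /\ forall s, V s <-> U (proj1_sig s)) /\ U x).
    split.
    + apply H3. intros U [V [_ [HU _]]]; exact HU.
    + intro s; split.
      * intros [V [HV Vs]]. destruct (HF V HV) as [U [HU EU]]. exists U. split; [exists V; auto|]. apply EU; auto.
      * intros [U [[V [HV [_ EV]]] Us]]. exists V. split; [auto|]. apply EV; auto.
Qed.

Lemma baire_cover_sub {S} (T : topology S) (Q : S -> Prop) (A0 : S -> Prop) (E : nat -> S -> Prop) :
  is_topology T -> dense T Q -> baire (subspace T Q) -> T A0 -> (exists x, A0 x) ->
  (forall x, A0 x -> Q x -> exists n, E n x) ->
  exists n A1, T A1 /\ (exists x, A1 x) /\ (forall x, A1 x -> A0 x) /\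
    (forall O, T O -> (exists x, O x) -> (forall x, O x -> A1 x) -> exists x, O x /\ E n x).
Proof.
  intros Htop HQ Hb HA0 Hne Hcov.
  destruct (baire_cover (subspace T Q) (fun s => A0 (proj1_sig s)) (fun n s => E n (proj1_sig s))
     (subspace_top T Q Htop) Hb) as [n [A1 [[U1 [HU1 EU1]] [[s Hs] [Hsub Hd]]]]].
  - exists A0. split; [exact HA0|]. tauto.
  - destruct (HQ A0 HA0 Hne) as [x [Ax Qx]]. exists (exist _ x Qx). exact Ax.
  - intros [x Qx] Ax. exact (Hcov x Ax Qx).
  - exists n, (fun x => U1 x /\ A0 x). split; [apply open_inter; auto|].
    split; [exists (proj1_sig s); split; [apply EU1; exact Hs | apply Hsub; exact Hs]|].
    split; [intros x [_ Hx]; exact Hx|].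
    intros O HO HOne HOsub.
    destruct (HQ O HO HOne) as [x [Ox Qx]].
    destruct (Hd (fun s => O (proj1_sig s))) as [[y Qy] [Oy Ey]].
    + exists O. split; [exact HO|]. tauto.
    + exists (exist _ x Qx). exact Ox.
    + intros [y Qy] Oy. apply EU1. simpl. exact (proj1 (HOsub y Oy)).
    + exists y. simpl in *. auto.
Qed.

Lemma pseudobase_local {Y} (TY : topology Y) (y0 : Y) (N : Y -> Prop) :
  is_topology TY -> nbhd TY N y0 -> has_countable_pseudobase (subspace TY N) ->
  exists (W : Y -> Prop) (C : nat -> Y -> Prop), TY W /\ W y0 /\
    (forall n, TY (C n)) /\ (forall n y, C n y -> W y) /\
    (forall V, TY V -> (exists y, V y) -> (forall y, V y -> W y) ->
        exists n, (exists y, C n y) /\ forall y, C n y -> V y).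
Proof.
  intros Htop [W [HW [Wy0 WN]]] [B [HB1 HB2]].
  exists W, (fun n y => W y /\ exists h : N y, B n (exist _ y h)).
  split; [exact HW|]. split; [exact Wy0|]. split; [|split].
  - intro n. destruct (HB1 n) as [[U [HU EU]] _].
    apply (open_ext TY (fun y => U y /\ W y)); [apply open_inter; auto|].
    intro y. split.
    + intros [Uy Wy]. split; [exact Wy|]. exists (WN y Wy). apply EU. exact Uy.
    + intros [Wy [h Bh]]. split; [|exact Wy]. apply EU in Bh. exact Bh.
  - intros n y [Wy _]; exact Wy.
  - intros V HV [v Vv] VW.
    destruct (HB2 (fun s => V (proj1_sig s))) as [n Hn].
    + exists V. split; [exact HV|]. tauto.
    + exists (exist _ v (WN v (VW v Vv))). exact Vv.
    + exists n. split.
      * destruct (HB1 n) as [_ [[y h] By]]. exists y. split.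
        -- apply VW. exact (Hn _ By).
        -- exists h. exact By.
      * intros y [Wy [h Bh]]. exact (Hn _ Bh).
Qed.

Lemma reduce {X Y Z} (TX: topology X) (TY: topology Y) (d: Z->Z->R) (g: X*Y -> Z) p :
  (forall A B eps, TX A -> TY B -> A (fst p) -> B (snd p) -> 0 < eps ->
     exists A1 C, TX A1 /\ TY C /\ (exists x, A1 x) /\ (exists y, C y) /\
       (forall x, A1 x -> A x) /\ (forall y, C y -> B y) /\
       (forall x y, A1 x -> C y -> d (g p) (g (x, y)) < eps)) ->
  quasicontinuous_at (prod_topology TX TY) (metric_topology d) g p.
Proof.
  intros H U W [U0 [HU0 [U0p U0U]]] [W0 [HW0 [W0p W0W]]].
  destruct (HU0 p U0p) as [A [B [HA [HB [Ap [Bp HAB]]]]]].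
  destruct (HW0 (g p) W0p) as [eps [Heps Hball]].
  destruct (H A B eps HA HB Ap Bp Heps) as [A1 [C [HA1 [HC [[x Hx] [[y Hy] [A1A [CB Hd]]]]]]]].
  exists (fun q => A1 (fst q) /\ C (snd q)). split; [|split; [|split]].
  - intros q [Hq1 Hq2]. exists A1, C. split; [exact HA1|]. split; [exact HC|].
    split; [exact Hq1|]. split; [exact Hq2|]. intros a b Ha Hb; simpl; auto.
  - exists (x, y). simpl. auto.
  - intros [a b] [Ha Hb]. apply U0U. apply HAB; auto.
  - intros [a b] [Ha Hb]. apply W0W. apply Hball. apply Hd; auto.
Qed.

Theorem theorem4p3 (X Y Z : Type) (TX : topology X) (TY : topology Y)
  (d : Z -> Z -> R) (f : X -> Y -> Z) :
  is_topology TX -> is_topology TY -> is_metric d ->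
  baire TX ->
  (forall y : Y, exists N : Y -> Prop, nbhd TY N y /\
      has_countable_pseudobase (subspace TY N)) ->
  ((forall x : X,
      quasicontinuous TY (metric_topology d) (fun y => f x y) /\
      exists Dx : Y -> Prop, dense TY Dx /\
        forall y, Dx y -> quasicontinuous_at TX (metric_topology d) (fun x' => f x' y) x)
   \/
   (forall y : Y,
      quasicontinuous TX (metric_topology d) (fun x => f x y) /\
      exists Qy : X -> Prop, dense TX Qy /\ baire (subspace TX Qy) /\
        forall x, Qy x -> quasicontinuous_at TY (metric_topology d) (fun y' => f x y') y)) ->
  quasicontinuous (prod_topology TX TY) (metric_topology d)
    (fun p : X * Y => f (fst p) (snd p)).
Proof.
  intros HX HY Hm Hb Hpb Hcase [x0 y0].
  apply reduce. simpl.
  intros A B eps HA HB Ax0 By0 Heps.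
  assert (He : 0 < eps / 6) by lra.
  pose proof Hm as [Hdpos [Hdz [Hds Hdt]]].
  destruct (Hpb y0) as [N [HN HNpb]].
  destruct (pseudobase_local TY y0 N HY HN HNpb) as [W [C [HW [Wy0 [HC [CW HCV]]]]]].
  assert (HV : TY (fun y => B y /\ W y)) by (apply open_inter; auto).
  assert (Vy0 : B y0 /\ W y0) by (split; auto).
  destruct Hcase as [Hi | Hii].
  - destruct (Hi x0) as [Hqx0 [D0 [HD0 HD0q]]].
    destruct (qc_ball TY d (fun y => f x0 y) y0 _ (eps/6) Hm (Hqx0 y0) HV Vy0 He) as [V1 [HV1 [[v1 Hv1] [V1V Hd1]]]].
    destruct (HD0 V1 HV1 (ex_intro _ v1 Hv1)) as [y2 [V1y2 Dy2]].
    destruct (qc_ball TX d (fun x => f x y2) x0 A (eps/6) Hm (HD0q y2 Dy2) HA Ax0 He) as [A0 [HA0 [A0ne [A0A Hd2]]]].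
    destruct (baire_cover TX A0 (fun n x => A0 x /\ (exists y, C n y) /\ (forall y, C n y -> V1 y) /\ (forall y, C n y -> d (f x y2) (f x y) < eps/6)) HX Hb HA0 A0ne) as [n [A1 [HA1 [A1ne [A1A0 Hdense]]]]].
    { intros x Ax.
      destruct (qc_ball TY d (fun y => f x y) y2 V1 (eps/6) Hm (proj1 (Hi x) y2) HV1 V1y2 He) as [V' [HV' [V'ne [V'V1 Hd3]]]].
      destruct (HCV V' HV' V'ne) as [n [Cne CV']].
      { intros y Hy. exact (proj2 (V1V y (V'V1 y Hy))). }
      exists n. split; [exact Ax|]. split; [exact Cne|]. split; [intros y Hy; apply V'V1, CV'; exact Hy|].
      intros y Hy. apply Hd3. apply CV'. exact Hy. }
    destruct A1ne as [a1 Ha1].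
    destruct (Hdense A1 HA1 (ex_intro _ a1 Ha1) (fun x h => h)) as [xa [_ [_ [Cne [CV1 _]]]]].
    exists A1, (C n). split; [exact HA1|]. split; [exact (HC n)|]. split; [exists a1; exact Ha1|]. split; [exact Cne|].
    split; [intros x Hx; apply A0A, A1A0; exact Hx|].
    split; [intros y Hy; exact (proj1 (V1V y (CV1 y Hy)))|].
    intros x y Hx Hy. simpl.
    destruct (Hi x) as [Hqx [Dx [HDx HDxq]]].
    destruct (qc_ball TY d (fun y => f x y) y (C n) (eps/6) Hm (Hqx y) (HC n) Hy He) as [B' [HB' [B'ne [B'C Hd4]]]].
    destruct (HDx B' HB' B'ne) as [y' [B'y' Dy']].
    destruct (qc_ball TX d (fun x => f x y') x A1 (eps/6) Hm (HDxq y' Dy') HA1 Hx He) as [A' [HA' [A'ne [A'A1 Hd5]]]].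
    destruct (Hdense A' HA' A'ne A'A1) as [x' [A'x' [A0x' [_ [_ Hd6]]]]].
    pose proof (Hd1 y2 V1y2). pose proof (Hd2 x' A0x'). pose proof (Hd6 y' (B'C y' B'y')).
    pose proof (Hd5 x' A'x'). pose proof (Hd4 y' B'y'). simpl in *.
    pose proof (Hdt (f x0 y0) (f x0 y2) (f x y)).
    pose proof (Hdt (f x0 y2) (f x' y2) (f x y)).
    pose proof (Hdt (f x' y2) (f x' y') (f x y)).
    pose proof (Hdt (f x' y') (f x y') (f x y)).
    pose proof (Hds (f x' y') (f x y')). pose proof (Hds (f x y') (f x y)).
    lra.
  - destruct (Hii y0) as [Hqy0 [Q [HQ [HQb HQq]]]].
    destruct (qc_ball TX d (fun x => f x y0) x0 A (eps/6) Hm (Hqy0 x0) HA Ax0 He) as [A0 [HA0 [A0ne [A0A Hd1]]]].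
    destruct (baire_cover_sub TX Q A0 (fun n x => A0 x /\ (exists y, C n y) /\ (forall y, C n y -> B y /\ W y) /\ (forall y, C n y -> d (f x y0) (f x y) < eps/6)) HX HQ HQb HA0 A0ne) as [n [A1 [HA1 [A1ne [A1A0 Hdense]]]]].
    { intros x Ax Qx.
      destruct (qc_ball TY d (fun y => f x y) y0 _ (eps/6) Hm (HQq x Qx) HV Vy0 He) as [V' [HV' [V'ne [V'V Hd3]]]].
      destruct (HCV V' HV' V'ne) as [n [Cne CV']].
      { intros y Hy. exact (proj2 (V'V y Hy)). }
      exists n. split; [exact Ax|]. split; [exact Cne|]. split; [intros y Hy; apply V'V, CV'; exact Hy|].
      intros y Hy. apply Hd3. apply CV'. exact Hy. }
    destruct A1ne as [a1 Ha1].
    destruct (Hdense A1 HA1 (ex_intro _ a1 Ha1) (fun x h => h)) as [xa [_ [_ [Cne [CV _]]]]].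
    exists A1, (C n). split; [exact HA1|]. split; [exact (HC n)|]. split; [exists a1; exact Ha1|]. split; [exact Cne|].
    split; [intros x Hx; apply A0A, A1A0; exact Hx|].
    split; [intros y Hy; exact (proj1 (CV y Hy))|].
    intros x y Hx Hy. simpl.
    destruct (qc_ball TX d (fun x => f x y) x A1 (eps/6) Hm (proj1 (Hii y) x) HA1 Hx He) as [A' [HA' [A'ne [A'A1 Hd5]]]].
    destruct (Hdense A' HA' A'ne A'A1) as [x' [A'x' [A0x' [_ [_ Hd6]]]]].
    pose proof (Hd1 x' A0x'). pose proof (Hd6 y Hy). pose proof (Hd5 x' A'x'). simpl in *.
    pose proof (Hdt (f x0 y0) (f x' y0) (f x y)).
    pose proof (Hdt (f x' y0) (f x' y) (f x y)).
    pose proof (Hds (f x' y) (f x y)).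
    lra.
Qed.
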